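(* Let $T>0$ and let $\mathcal{H}$ be a dense subset of $C_K(\mathbb{R})$. Let $z=\{z(u,t),\ u\in[0,1],\ t\in(0,T]\}\in D([0,1],C(0,T])$ satisfy $z(u,t)\le z(v,t)$ for $u<v$, $t\in(0,T]$, and suppose that for all $\varphi\in\mathcal{H}$, $$\int_0^1\varphi(z(u,t))du\to\int_0^1\varphi(u)du,\quad t\to0.$$ Then $\lim_{t\to0}z(u,t)=u$ for each $u\in(0,1)$. Moreover, if $\lim_{t\to0}z(0,t)=0$ and $\lim_{t\to0}z(1,t)=1$, then the extension of $z$ to $[0,1]\times[0,T]$ given by $z(u,0)=u$ belongs to $D([0,1],C[0,T])$.
   Context: $C_K(\mathbb{R})$ is the class of continuous functions on $\mathbb{R}$ with compact support (density is with respect to uniform convergence). $C(0,T]$ is the space of continuous functions on $(0,T]$ with the metric of uniform convergence on compact subsets of $(0,T]$, $C[0,T]$ has the uniform metric, and $D([0,1],E)$ is the Skorohod space of càdlàg maps from $[0,1]$ to $E$. *)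

(* Defs.v *)
From HB Require Import structures.
From mathcomp Require Import all_boot all_order all_algebra.
From mathcomp Require Import all_classical all_reals all_analysis.
Set Implicit Arguments. Unset Strict Implicit. Unset Printing Implicit Defensive.
Import Order.TTheory GRing.Theory Num.Theory.
Import numFieldNormedType.Exports.
Local Open Scope classical_set_scope.
Local Open Scope ring_scope.

Definition CK (R : realType) (f : R -> R) : Prop :=
  continuous f /\ compact (closure (f @^-1` [set~ 0])).

Definition dense_in_CK (R : realType) (H : set (R -> R)) : Prop :=
  H `<=` @CK R /\
  forall f, CK f -> forall e : R, 0 < e ->
    exists2 h, H h & forall x, `|f x - h x| < e.

(* z : [0,1] x (0,T] -> R belongs to D([0,1], C(0,T]).  C(0,T] carries the
   metric of uniform convergence on compact subsets of (0,T]; every compact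
   subset of (0,T] lies in some [a,T] with 0 < a <= T, so convergence in
   C(0,T] is uniform convergence on each [a,T]. *)
Definition in_D_C0T (R : realType) (T : R) (z : R -> R -> R) : Prop :=
  (forall u, 0 <= u <= 1 -> {within `]0, T], continuous (z u)}) /\
  (forall u, 0 <= u < 1 -> forall a, 0 < a <= T -> forall e : R, 0 < e ->
     exists2 d : R, 0 < d & forall v, u < v < u + d -> v <= 1 ->
       forall t, a <= t <= T -> `|z v t - z u t| < e) /\
  (forall u, 0 < u <= 1 -> exists g : R -> R,
     {within `]0, T], continuous g} /\
     forall a, 0 < a <= T -> forall e : R, 0 < e ->
       exists2 d : R, 0 < d & forall v, u - d < v < u -> 0 <= v ->
         forall t, a <= t <= T -> `|z v t - g t| < e).

Definition in_D_CT (R : realType) (T : R) (z : R -> R -> R) : Prop :=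
  (forall u, 0 <= u <= 1 -> {within `[0, T], continuous (z u)}) /\
  (forall u, 0 <= u < 1 -> forall e : R, 0 < e ->
     exists2 d : R, 0 < d & forall v, u < v < u + d -> v <= 1 ->
       forall t, 0 <= t <= T -> `|z v t - z u t| < e) /\
  (forall u, 0 < u <= 1 -> exists g : R -> R,
     {within `[0, T], continuous g} /\
     forall e : R, 0 < e ->
       exists2 d : R, 0 < d & forall v, u - d < v < u -> 0 <= v ->
         forall t, 0 <= t <= T -> `|z v t - g t| < e).

Definition ext0 (R : realType) (z : R -> R -> R) : R -> R -> R :=
  fun u t => if t == 0 then u else z u t.

(* Main.v *)
Require Import Defs.
From HB Require Import structures.
From mathcomp Require Import all_boot all_order all_algebra.
From mathcomp Require Import all_classical all_reals all_analysis.
Import Order.TTheory GRing.Theory Num.Theory.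
Import numFieldNormedType.Exports.
Local Open Scope classical_set_scope.
Local Open Scope ring_scope.
From mathcomp Require Import ring lra.
Section H.
Variable R : realType.
Notation mu := (@lebesgue_measure R).

Notation I01 := (`[(0:R), 1]%classic : set R).
Lemma mu01 : mu I01 = 1%E.
Proof. by rewrite lebesgue_measure_itv /= lte_fin ltr01 oppr0 adde0. Qed.
Lemma bint (g : R -> R) (M : R) : measurable_fun I01 g ->
  (forall x, I01 x -> `|g x| <= M) -> mu.-integrable I01 (EFin \o g).
Proof.
move=> mg gM; apply: measurable_bounded_integrable => //.
  have h := mu01; first [ by rewrite h ltry | by rewrite -[X in (X < _)%E]/(mu I01) h ltry ].
rewrite /bounded_near; near=> N; move=> x /= Ax; apply: (le_trans (gM x Ax)).
near: N; exact: nbhs_pinfty_ge (num_real M).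
Unshelve. all: by end_near.
Qed.

Lemma Rint_indic (A : set R) : measurable A ->
  Rintegral mu I01 (\1_A : R -> R) = fine (mu (A `&` I01)).
Proof. by move=> mA; rewrite /Rintegral integral_indic. Qed.

Lemma Rint_cst01 (c : R) : Rintegral mu I01 (fun _ => c) = c.
Proof. by rewrite Rintegral_cst // (_ : fine (mu I01) = 1) ?mulr1 // mu01. Qed.

Lemma key (T : R) (H : set (R -> R)) (z : R -> R -> R) (f : R -> R)
  (A B : set R) (P : R -> Prop) :
  0 < T -> dense_in_CK H ->
  (forall phi, H phi ->
     Rintegral mu I01 (fun u => phi (z u t)) @[t --> 0^'+] --> Rintegral mu I01 phi) ->
  (forall t, 0 < t <= T -> measurable_fun I01 (fun v => z v t)) ->
  CK f -> (forall x, 0 <= f x <= 1) -> measurable A -> measurable B ->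
  (forall x, I01 x -> B x -> f x = 1) ->
  (forall t, 0 < t <= T -> P t -> forall v, I01 v -> ~ A v -> f (z v t) = 0) ->
  fine (mu (A `&` I01)) < fine (mu (B `&` I01)) ->
  \forall t \near 0^'+, ~ P t.
Proof.
move=> T0 [HCK Hd] conv mz fCK f01 mA mB fB fA.
set a := fine (mu (A `&` I01)); set b := fine (mu (B `&` I01)) => gap.
pose e := (b - a) / 3.
have e0 : 0 < e by rewrite /e; lra.
have ee : b - a = 3 * e by rewrite /e; field.
have [phi Hphi dphi] := Hd f fCK e e0.
have cphi := (HCK _ Hphi).1.
have mphi := measurable_realfun.continuous_measurable_fun cphi.
have dphi' : forall x, f x - e < phi x < f x + e.
  by move=> x; have := dphi x; rewrite ltr_norml => /andP[h1 h2]; apply/andP; split; lra.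
have phib : forall x, `|phi x| <= 1 + e.
  move=> x; have := dphi' x; have := f01 x => /andP[h1 h2] /andP[h3 h4].
  rewrite ler_norml; apply/andP; split; lra.
have intphi : mu.-integrable I01 (EFin \o phi).
  by apply: (@bint _ (1 + e)) => //; exact: measurable_funTS.
have intind : forall S, measurable S -> mu.-integrable I01 (EFin \o (\1_S : R -> R)).
  move=> S mS; apply: (@bint _ (1)) => //; idtac.
  by move=> x _; rewrite indicE; case: (_ \in _) => /=; rewrite ?normr1 ?normr0.
have intc : forall c : R, mu.-integrable I01 (EFin \o (fun _ => c)).
  by move=> c; apply: (@bint _ (`|c|)).
have intBc : forall S (c : R), measurable S ->
    mu.-integrable I01 (EFin \o (fun x => \1_S x + c)).
  move=> S c mS; apply: (@bint _ (1 + `|c|)).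
    by apply: (measurable_realfun.measurable_funD (f := \1_S) (g := fun _ => c)) => //; exact: measurable_realfun.measurable_indic.
  move=> x _; rewrite (le_trans (ler_normD _ _)) // lerD2r indicE.
  by case: (_ \in _) => /=; rewrite ?normr1 ?normr0.
have lowB : b - e <= Rintegral mu I01 phi.
  have <- : Rintegral mu I01 (fun x => \1_B x - e) = b - e.
    have hB : Rintegral mu I01 (fun x => \1_B x) = b := Rint_indic B mB.
    by rewrite RintegralB //; [rewrite (Rint_cst01 e) hB | exact: intind].
  apply: le_Rintegral => //; first exact: (intBc B (- e)).
  move=> x Ix; rewrite indicE.
  have := dphi' x; have := f01 x => /andP[h1 h2] /andP[h3 h4].
  case: (boolP (x \in B)) => xB /=.
    by rewrite (fB x Ix (set_mem xB)) in h3; lra.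
  lra.
have := conv phi Hphi; move/cvgrPdist_lt => /(_ e e0) Hc.
near=> t => Pt.
have t0 : 0 < t by near: t; exact: nbhs_right_gt.
have tT : t <= T by near: t; exact: nbhs_right_le.
have tI : 0 < t <= T by rewrite t0 tT.
have mzt := mz t tI.
have intzt : mu.-integrable I01 (EFin \o (fun v => phi (z v t))).
  by apply: (@bint _ (1 + e)) => //; exact: measurableT_comp mphi mzt.
have up : Rintegral mu I01 (fun v => phi (z v t)) <= a + e.
  have <- : Rintegral mu I01 (fun x => \1_A x + e) = a + e.
    have hA : Rintegral mu I01 (fun x => \1_A x) = a := Rint_indic A mA.
    by rewrite RintegralD //; [rewrite (Rint_cst01 e) hA | exact: intind].
  apply: le_Rintegral => //; first exact: (intBc A e).
  move=> v Iv; rewrite indicE.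
  have := dphi' (z v t); have := f01 (z v t) => /andP[h1 h2] /andP[h3 h4].
  case: (boolP (v \in A)) => vA /=.
    lra.
  rewrite (fA t tI Pt v Iv) in h4; last by move=> Av; move/negP: vA; apply; exact/mem_set.
  lra.
have : `|Rintegral mu I01 phi - Rintegral mu I01 (fun u => phi (z u t))| < e.
  by near: t; exact: Hc.
rewrite ltr_norml => /andP[h1 h2]; lra.
Unshelve. all: by end_near.
Qed.
Definition trapf (a b c : R) (x : R) : R :=
  Num.min 1 (Num.max 0 (Num.min ((x - a) / c) ((b - x) / c))).

Lemma trapf_cont a b c : continuous (trapf a b c).
Proof.
move=> x.
apply: (@continuous_min _ _ (fun _ => (1:R)) (fun x => Num.max 0 (Num.min ((x - a) / c) ((b - x) / c)))).
  exact: cvg_cst.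
apply: (@continuous_max _ _ (fun _ => (0:R)) (fun x => (Num.min ((x - a) / c) ((b - x) / c)))).
  exact: cvg_cst.
apply: (@continuous_min _ _ (fun x => (x - a) / c) (fun x => (b - x) / c)).
  by apply: cvgM; [apply: cvgB; [exact: cvg_id| exact: cvg_cst]| exact: cvg_cst].
by apply: cvgM; [apply: cvgB; [exact: cvg_cst| exact: cvg_id]| exact: cvg_cst].
Qed.

Lemma trapf0 a b c x : 0 < c -> (x <= a \/ b <= x) -> trapf a b c x = 0.
Proof.
move=> c0 H; rewrite /trapf.
have : Num.min ((x - a) / c) ((b - x) / c) <= 0.
  case: H => H.
    by rewrite ge_min; apply/orP; left; rewrite pmulr_lle0 ?invr_gt0 // subr_le0.
  by rewrite ge_min; apply/orP; right; rewrite pmulr_lle0 ?invr_gt0 // subr_le0.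
move=> h; rewrite (_ : Num.max 0 _ = 0); last by apply/max_idPl.
by apply/min_idPr.
Qed.

Lemma trapf_le1 a b c x : trapf a b c x <= 1.
Proof. by rewrite /trapf ge_min lexx. Qed.

Lemma trapf_ge0 a b c x : 0 <= trapf a b c x.
Proof. by rewrite /trapf le_min ler01 le_max lexx. Qed.

Lemma trapf1 a b c x : 0 < c -> a + c <= x -> x <= b - c -> trapf a b c x = 1.
Proof.
move=> c0 h1 h2; rewrite /trapf.
have : 1 <= Num.min ((x - a) / c) ((b - x) / c).
  rewrite le_min !ler_pdivlMr // !mul1r; apply/andP; split; lra.
move=> h; rewrite (_ : Num.max 0 _ = Num.min ((x - a) / c) ((b - x) / c)); last first.
  by apply/max_idPr; apply: le_trans h.
by apply/min_idPl.
Qed.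

Lemma trapf_CK a b c : 0 < c -> CK (trapf a b c).
Proof.
move=> c0; split; first exact: trapf_cont.
apply: (@subclosed_compact _ _ `[a, b]); [exact: closed_closure|exact: segment_compact|].
rewrite (closure_id `[a, b]).1; last exact: itv_closed.
apply: closureS => x /= fx; rewrite in_itv /=; apply/andP; split.
  by rewrite leNgt; apply/negP => xa; apply: fx; apply: trapf0 => //; left; exact: ltW.
by rewrite leNgt; apply/negP => xa; apply: fx; apply: trapf0 => //; right; exact: ltW.
Qed.

Lemma mono_le (T : R) (z : R -> R -> R) :
  (forall u v, 0 <= u -> u < v -> v <= 1 -> forall t, 0 < t <= T -> z u t <= z v t) ->
  forall u v, 0 <= u -> u <= v -> v <= 1 -> forall t, 0 < t <= T -> z u t <= z v t.
Proof.
move=> hm u v u0 uv v1 t tT; move: uv; rewrite le_eqVlt => /orP[/eqP -> //|uv].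
exact: hm.
Qed.
Arguments mono_le {T z}.

Lemma mz_lem (T : R) (z : R -> R -> R) :
  (forall u v, 0 <= u -> u < v -> v <= 1 -> forall t, 0 < t <= T -> z u t <= z v t) ->
  forall t, 0 < t <= T -> measurable_fun I01 (fun v => z v t).
Proof.
move=> hm t tT.
pose cl (v : R) := Num.min 1 (Num.max 0 v).
have cl0 : forall v, 0 <= cl v by move=> v; rewrite /cl le_min ler01 le_max lexx.
have cl1 : forall v, cl v <= 1 by move=> v; rewrite /cl ge_min lexx.
have clm : forall x y, x <= y -> cl x <= cl y.
  by move=> x y xy; rewrite /cl le_min2 // le_max2.
apply: (@eq_measurable_fun _ _ _ _ _ (fun v => z (cl v) t)).
  move=> v /set_mem /=; rewrite in_itv /= => /andP[v0 v1].
  by rewrite /cl (max_idPr v0) (min_idPr v1).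
apply: measurable_realfun.nondecreasing_measurable => // x y xy.
by apply: (mono_le hm); [exact: cl0 | exact: clm | exact: cl1 | exact: tT].
Qed.
Lemma fine_mu_itv (x y : R) b1 b2 : x < y ->
  fine (mu [set` Interval (BSide b1 x) (BSide b2 y)]) = y - x.
Proof.
move=> xy; rewrite lebesgue_measure_itv /=.
by rewrite lte_fin xy.
Qed.

Lemma part1 (T : R) (H : set (R -> R)) (z : R -> R -> R) :
  0 < T -> dense_in_CK H ->
  (forall u v, 0 <= u -> u < v -> v <= 1 -> forall t, 0 < t <= T -> z u t <= z v t) ->
  (forall phi, H phi ->
     Rintegral mu I01 (fun u => phi (z u t)) @[t --> 0^'+] --> Rintegral mu I01 phi) ->
  forall u, 0 < u < 1 -> z u t @[t --> 0^'+] --> u.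
Proof.
move=> T0 hd hm conv u /andP[u0 u1].
have mz := @mz_lem T z hm.
apply/cvgrPdist_lt => e e0.
set mm := Num.min e (Num.min u (1 - u)).
have mme : mm <= e by rewrite /mm ge_min lexx.
have mmu : mm <= u by rewrite /mm !ge_min lexx orbT.
have mmu' : mm <= 1 - u by rewrite /mm !ge_min lexx !orbT.
have mm0 : 0 < mm by rewrite /mm !lt_min e0 u0 subr_gt0 u1.
pose d := mm / 2.
have dd : 2 * d = mm by rewrite /d; field.
have d0 : 0 < d by lra.
have Hup : \forall t \near 0^'+, ~ (u + e <= z u t).
  apply: (@key T H z (trapf (- d) (u + e) d) (`[0, u[%classic : set R)
    (`[0, u + d]%classic : set R) (fun t => u + e <= z u t)) => //.
  - exact: trapf_CK.
  - by move=> x; rewrite trapf_ge0 trapf_le1.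
  - move=> x _; rewrite /= in_itv /= => /andP[x0 x1].
    by apply: trapf1 => //; lra.
  - move=> t tI Pt v; rewrite /= !in_itv /= => /andP[v0 v1] nA.
    apply: trapf0 => //; right; apply: (le_trans Pt).
    apply: (mono_le hm); [exact: ltW | | exact: v1 | exact: tI].
    rewrite leNgt; apply/negP => vu; apply: nA.
    by rewrite v0 vu.
  - rewrite !setIidl; first last.
    + by move=> x; rewrite /= !in_itv /= => /andP[-> h]; lra.
    + by move=> x; rewrite /= !in_itv /= => /andP[-> h]; lra.
    by rewrite !fine_mu_itv //; lra.
have Hlo : \forall t \near 0^'+, ~ (z u t <= u - e).
  apply: (@key T H z (trapf (u - e) (1 + d) d) (`]u, 1]%classic : set R)
    (`[u - d, 1]%classic : set R) (fun t => z u t <= u - e)) => //.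
  - exact: trapf_CK.
  - by move=> x; rewrite trapf_ge0 trapf_le1.
  - move=> x _; rewrite /= in_itv /= => /andP[x0 x1].
    by apply: trapf1 => //; lra.
  - move=> t tI Pt v; rewrite /= !in_itv /= => /andP[v0 v1] nA.
    apply: trapf0 => //; left; apply: le_trans Pt.
    apply: (mono_le hm); [exact: v0 | | exact: ltW | exact: tI].
    rewrite leNgt; apply/negP => vu; apply: nA.
    by rewrite vu v1.
  - rewrite !setIidl; first last.
    + by move=> x; rewrite /= !in_itv /= => /andP[h ->]; rewrite andbT; lra.
    + by move=> x; rewrite /= !in_itv /= => /andP[h ->]; rewrite andbT; lra.
    by rewrite !fine_mu_itv //; lra.
near=> t.
have h1 : z u t < u + e by rewrite ltNge; apply/negP; near: t; exact: Hup.
have h2 : u - e < z u t by rewrite ltNge; apply/negP; near: t; exact: Hlo.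
rewrite ltr_norml; apply/andP; split; lra.
Unshelve. all: by end_near.
Qed.
Lemma near_ex (P : R -> Prop) (x : R) :
  (\forall y \near x, P y) <-> exists2 d : R, 0 < d & forall y, `|x - y| < d -> P y.
Proof.
rewrite nbhs_normP /nbhs_ball_ /filter_from /=; split.
  by move=> [d d0 H]; exists d => // y yd; apply: H.
by move=> [d d0 H]; exists d => // y yd; apply: H.
Qed.

Lemma near_right_ex (P : R -> Prop) :
  (\forall t \near 0^'+, P t) -> exists2 d : R, 0 < d & forall t, 0 < t < d -> P t.
Proof.
rewrite near_withinE => /near_ex [d d0 H]; exists d => // t /andP[t0 td].
apply: H => //; by rewrite sub0r normrN gtr0_norm.
Qed.

Lemma within_epsP (A : set R) (f : R -> R) :
  {within A, continuous f} <-> forall x, A x -> forall e : R, 0 < e ->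
    exists2 d : R, 0 < d & forall y, A y -> `|x - y| < d -> `|f x - f y| < e.
Proof.
rewrite subspace_continuousP; split.
  move=> H x Ax e e0; have := H x Ax; move/cvgrPdist_lt => /(_ e e0).
  by rewrite near_withinE => /near_ex [d d0 Hd]; exists d => // y Ay xy; apply: Hd.
move=> H x Ax; apply/cvgrPdist_lt => e e0; rewrite near_withinE; apply/near_ex.
have [d d0 Hd] := H x Ax e e0; exists d => // y xy Ay; exact: Hd.
Qed.

Lemma andP_intro {a b : bool} : a -> b -> a && b.
Proof. by move=> -> ->. Qed.

Lemma ar_b (e u w zu zv zw : R) : `|u - zu| < e / 4 -> `|w - zw| < e / 4 ->
  w <= u + e / 4 -> zu <= zv -> zv <= zw -> `|zv - zu| < e.
Proof.
rewrite !ltr_norml => /andP[h1 h1'] /andP[h2 h2'] h3 h4 h5.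
apply/andP; split; lra.
Qed.

Lemma ar_c0 (e u w zu zw g : R) : `|u - zu| < e / 4 -> `|w - zw| < e / 4 ->
  u - e / 4 <= w -> zw <= g -> g <= zu -> `|u - g| < e.
Proof.
rewrite !ltr_norml => /andP[h1 h1'] /andP[h2 h2'] h3 h4 h5.
apply/andP; split; lra.
Qed.

Lemma ar_c (e u w zu zv zw g : R) : `|u - zu| < e / 4 -> `|w - zw| < e / 4 ->
  u - e / 4 <= w -> zw <= zv -> zv <= zu -> zw <= g -> g <= zu -> `|zv - g| < e.
Proof.
rewrite !ltr_norml => /andP[h1 h1'] /andP[h2 h2'] h3 h4 h5 h6 h7.
apply/andP; split; lra.
Qed.

Arguments ar_b {e u w zu zv zw}.
Arguments ar_c0 {e u w zu zw g}.
Arguments ar_c {e u w zu zv zw g}.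

Lemma part2 (T : R) (z : R -> R -> R) :
  0 < T -> in_D_C0T T z ->
  (forall u v, 0 <= u -> u < v -> v <= 1 -> forall t, 0 < t <= T -> z u t <= z v t) ->
  (forall u, 0 <= u <= 1 -> z u t @[t --> 0^'+] --> u) ->
  in_D_CT T (ext0 z).
Proof.
move=> T0 [hC1 [hC2 hC3]] hm hlim.
have le1 : forall u, 0 <= u <= 1 -> forall e : R, 0 < e ->
    exists2 d : R, 0 < d & forall t, 0 < t < d -> `|u - z u t| < e.
  move=> u uI e e0; apply: near_right_ex.
  by have := hlim u uI; move/cvgrPdist_lt => /(_ e e0).
have le2 : forall u w, 0 <= u <= 1 -> 0 <= w <= 1 -> forall e : R, 0 < e ->
    exists2 d : R, 0 < d & forall t, 0 < t < d -> `|u - z u t| < e /\ `|w - z w t| < e.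
  move=> u w uI wI e e0.
  have [d1 d10 H1] := le1 u uI e e0; have [d2 d20 H2] := le1 w wI e e0.
  exists (Num.min d1 d2); first by rewrite lt_min d10 d20.
  move=> t /andP[t0]; rewrite lt_min => /andP[td1 td2].
  by split; [apply: H1 | apply: H2]; rewrite t0.
have mle := mono_le hm.
split.
  move=> u /andP[u0 u1]; apply/within_epsP => x; rewrite /= in_itv /= => /andP[x0 xT] e e0.
  case: (eqVneq x 0) => [->|xn0].
    have [d d0 Hd] := le1 u (andP_intro u0 u1) e e0.
    exists d => // y; rewrite /= in_itv /= => /andP[y0 yT] hy.
    rewrite /ext0 eqxx; case: (eqVneq y 0) => [_|yn0]; first by rewrite /= subrr normr0.
    apply: Hd.
    rewrite sub0r normrN ger0_norm // in hy.
    by rewrite hy andbT lt_neqAle eq_sym yn0 y0.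
  have xp : 0 < x by rewrite lt_neqAle eq_sym xn0 x0.
  have := hC1 u (andP_intro u0 u1); move/within_epsP.
  move=> /(_ x _ e e0) [|d d0 Hd]; first by rewrite /= in_itv /= xp xT.
  exists (Num.min d x); first by rewrite lt_min d0 xp.
  move=> y; rewrite /= in_itv /= => /andP[y0 yT]; rewrite lt_min => /andP[hyd hyx].
  have yp : 0 < y.
    by move: hyx; rewrite ltr_norml => /andP[_ h]; lra.
  rewrite /ext0 (negbTE xn0) gt_eqF //; apply: Hd => //.
  by rewrite /= in_itv /= yp yT.
split.
  move=> u /andP[u0 u1] e e0.
  set w := Num.min 1 (u + e / 4).
  have uw : u < w by rewrite lt_min u1 /=; lra.
  have w1 : w <= 1 by rewrite /w ge_min lexx.
  have wu : w <= u + e / 4 by rewrite /w ge_min lexx orbT.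
  have [d0 d00 Hd0] := le2 u w (andP_intro u0 (ltW u1)) (andP_intro (le_trans u0 (ltW uw)) w1) (e / 4) ltac:(lra).
  set a := Num.min (d0 / 2) T.
  have a0 : 0 < a by rewrite lt_min T0 andbT; lra.
  have aT : a <= T by rewrite /a ge_min lexx orbT.
  have ad : a < d0 by apply: (le_lt_trans (y := d0 / 2)); [rewrite /a ge_min lexx | lra].
  have [d1 d10 Hd1] := hC2 u (andP_intro u0 u1) a (andP_intro a0 aT) e e0.
  exists (Num.min d1 (w - u)); first by rewrite lt_min d10 subr_gt0 uw.
  move=> v /andP[uv vud] v1 t /andP[t0 tT].
  have m1 : Num.min d1 (w - u) <= d1 by rewrite ge_min lexx.
  have m2 : Num.min d1 (w - u) <= w - u by rewrite ge_min lexx orbT.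
  have vd1 : v < u + d1 by lra.
  have vw : v < u + (w - u) by lra.
  rewrite /ext0; case: (eqVneq t 0) => [_|tn0].
    by rewrite ltr_norml; apply/andP; split; lra.
  have tp : 0 < t by rewrite lt_neqAle eq_sym tn0 t0.
  case: (leP a t) => [at_|ta].
    by apply: Hd1 => //; [rewrite uv | rewrite at_ tT].
  have tI : 0 < t <= T by rewrite tp tT.
  have [h1 h2] := Hd0 t ltac:(by rewrite tp (lt_trans ta ad)).
  have zuv := mle u v u0 (ltW uv) v1 t tI.
  have zvw := mle v w (le_trans u0 (ltW uv)) (ltW (lt_le_trans (y := u + (w - u)) vw ltac:(by rewrite addrC subrK))) w1 t tI.
  exact: (ar_b h1 h2 wu zuv zvw).

move=> u /andP[u0 u1].
have [g [gc gl]] := hC3 u (andP_intro u0 u1).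
have near_v : forall t, 0 < t <= T -> forall w, 0 <= w < u -> forall e : R, 0 < e ->
    exists v, [/\ w < v, v < u & `|z v t - g t| < e].
  move=> t /andP[t0 tT] w /andP[w0 wu] e e0.
  have [d d0 Hd] := gl t (andP_intro t0 tT) e e0.
  exists (Num.max (u - d / 2) ((w + u) / 2)).
  have hv1 : (w + u) / 2 <= Num.max (u - d / 2) ((w + u) / 2) by rewrite le_max lexx orbT.
  have hv2 : u - d / 2 <= Num.max (u - d / 2) ((w + u) / 2) by rewrite le_max lexx.
  have hv3 : Num.max (u - d / 2) ((w + u) / 2) < u by rewrite gt_max; apply/andP; split; lra.
  split => //; first lra.
  apply: Hd; [apply/andP; split; lra | lra | by rewrite lexx tT].
have gb : forall t, 0 < t <= T -> forall w, 0 <= w < u -> z w t <= g t <= z u t.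
  move=> t tI w /andP[w0 wu]; apply/andP; split.
    rewrite leNgt; apply/negP => hlt.
    have [v [wv vu hv]] := near_v t tI w (andP_intro w0 wu) (z w t - g t) ltac:(lra).
    have := mle w v w0 (ltW wv) (ltW (lt_le_trans vu u1)) t tI.
    move: hv; rewrite ltr_norml => /andP[h1 h2]; lra.
  rewrite leNgt; apply/negP => hlt.
  have [v [wv vu hv]] := near_v t tI w (andP_intro w0 wu) (g t - z u t) ltac:(lra).
  have := mle v u (le_trans w0 (ltW wv)) (ltW vu) u1 t tI.
  move: hv; rewrite ltr_norml => /andP[h1 h2]; lra.
exists (fun t => if t == 0 then u else g t); split.
  apply/within_epsP => x; rewrite /= in_itv /= => /andP[x0 xT] e e0.
  case: (eqVneq x 0) => [->|xn0].
    set w := Num.max 0 (u - e / 4).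
    have w0 : 0 <= w by rewrite le_max lexx.
    have wu : w < u by rewrite gt_max u0 /=; lra.
    have uw : u - e / 4 <= w by rewrite le_max lexx orbT.
    have [d d0 Hd] := le2 u w (andP_intro (ltW u0) u1) (andP_intro w0 (ltW (lt_le_trans wu u1))) (e / 4) ltac:(lra).
    exists d => // y; rewrite /= in_itv /= => /andP[y0 yT] hy.
    rewrite /= ?eqxx; case: (eqVneq y 0) => [_|yn0]; first by rewrite /= subrr normr0.
    rewrite /=.
    have yp : 0 < y by rewrite lt_neqAle eq_sym yn0 y0.
    rewrite sub0r normrN gtr0_norm // in hy.
    have [h1 h2] := Hd y ltac:(by rewrite yp hy).
    have := gb y (andP_intro yp yT) w (andP_intro w0 wu) => /andP[g1 g2].
    exact: (ar_c0 h1 h2 uw g1 g2).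

  have xp : 0 < x by rewrite lt_neqAle eq_sym xn0 x0.
  move/within_epsP: gc => /(_ x _ e e0) [|d d0 Hd]; first by rewrite /= in_itv /= xp xT.
  exists (Num.min d x); first by rewrite lt_min d0 xp.
  move=> y; rewrite /= in_itv /= => /andP[y0 yT]; rewrite lt_min => /andP[hyd hyx].
  have yp : 0 < y.
    by move: hyx; rewrite ltr_norml => /andP[_ h]; lra.
  rewrite /= ?(negbTE xn0) gt_eqF //; apply: Hd => //.
  by rewrite /= in_itv /= yp yT.
move=> e e0.
set w := Num.max 0 (u - e / 4).
have w0 : 0 <= w by rewrite le_max lexx.
have wu : w < u by rewrite gt_max u0 /=; lra.
have uw : u - e / 4 <= w by rewrite le_max lexx orbT.
have [d0 d00 Hd0] := le2 u w (andP_intro (ltW u0) u1) (andP_intro w0 (ltW (lt_le_trans wu u1))) (e / 4) ltac:(lra).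
set a := Num.min (d0 / 2) T.
have a0 : 0 < a by rewrite lt_min T0 andbT; lra.
have aT : a <= T by rewrite /a ge_min lexx orbT.
have ad : a < d0 by apply: (le_lt_trans (y := d0 / 2)); [rewrite /a ge_min lexx | lra].
have [d1 d10 Hd1] := gl a (andP_intro a0 aT) e e0.
exists (Num.min d1 (u - w)); first by rewrite lt_min d10 subr_gt0 wu.
move=> v /andP[uv vu] v0 t /andP[t0 tT].
have m1 : Num.min d1 (u - w) <= d1 by rewrite ge_min lexx.
have hvd1 : u - d1 < v by lra.
have hvw : w < v.
  have : Num.min d1 (u - w) <= u - w by rewrite ge_min lexx orbT.
  lra.
rewrite /ext0; case: (eqVneq t 0) => [_|tn0].
  by rewrite ltr_norml; apply/andP; split; lra.
have tp : 0 < t by rewrite lt_neqAle eq_sym tn0 t0.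
case: (leP a t) => [at_|ta].
  by apply: Hd1 => //; [rewrite hvd1 vu | rewrite at_ tT].
have tI : 0 < t <= T by rewrite tp tT.
have [h1 h2] := Hd0 t ltac:(by rewrite tp (lt_trans ta ad)).
have zwv := mle w v w0 (ltW hvw) (ltW (lt_le_trans vu u1)) t tI.
have zvu := mle v u v0 (ltW vu) u1 t tI.
have := gb t tI w (andP_intro w0 wu) => /andP[g1 g2].
exact: (ar_c h1 h2 uw zwv zvu g1 g2).

Qed.
End H.

Theorem lemma2p8 (R : realType) (T : R) (H : set (R -> R)) (z : R -> R -> R) :
  0 < T ->
  dense_in_CK H ->
  in_D_C0T T z ->
  (forall u v, 0 <= u -> u < v -> v <= 1 ->
     forall t, 0 < t <= T -> z u t <= z v t) ->
  (forall phi, H phi ->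
     Rintegral lebesgue_measure `[0, 1] (fun u => phi (z u t)) @[t --> 0^'+]
       --> Rintegral lebesgue_measure `[0, 1] phi) ->
  (forall u, 0 < u < 1 -> (z u t @[t --> 0^'+] --> u)) /\
  ((z 0 t @[t --> 0^'+] --> (0:R)) -> (z 1 t @[t --> 0^'+] --> (1:R)) ->
     in_D_CT T (ext0 z)).
Proof.
move=> T0 hd hC hm conv.
have p1 := @part1 R T H z T0 hd hm conv.
split => // l0 l1.
apply: (@part2 R T z) => // u /andP[u0 u1].
case: (eqVneq u 0) => [->//|un0]; case: (eqVneq u 1) => [->//|un1].
by apply: p1; rewrite !lt_neqAle eq_sym un0 u0 un1 u1.
Qed.
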